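(* There exists an absolute positive constant $c$ such that for any prime power $q$ and any multiplicative subgroup $A$ of the finite field $\mathbb{F}_q$ with $|A|\ge c\,q^{3/4}$, there is a cyclic ordering of the elements of $A$ such that the sum of any two consecutive elements also belongs to $A$.
   Context: A multiplicative subgroup of $\mathbb{F}_q$ is a subgroup of the multiplicative group $\mathbb{F}_q^{*}$. *)

(* Defs.v *)
From HB Require Import structures.
From Stdlib Require Import Reals.
From mathcomp Require Import all_boot all_order all_algebra.
Set Implicit Arguments. Unset Strict Implicit. Unset Printing Implicit Defensive.
Import GRing.Theory.
Local Open Scope ring_scope.

Definition mult_subgroup (F : finFieldType) (A : {set F}) : Prop :=
  [/\ (0 : F) \notin A, (1 : F) \in A,
      {in A &, forall x y, x * y \in A} & {in A, forall x, x^-1 \in A}].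

Definition good_cyclic_ordering (F : finFieldType) (A : {set F}) (s : seq F) : Prop :=
  perm_eq s (enum A) /\ cycle (fun x y : F => x + y \in A) s.

(* Main.v *)
Require Import Defs.
From Stdlib Require Import Reals.
From mathcomp Require Import all_boot all_order all_algebra.
From Stdlib Require Import Lra.
From mathcomp Require Import all_field.
From mathcomp Require Import zify ring.
From mathcomp Require lra.
Set Implicit Arguments. Unset Strict Implicit. Unset Printing Implicit Defensive.
Import Order.TTheory GRing.Theory Num.Theory.

Section Bridge.
Local Open Scope R_scope.
Lemma bridge (q a : nat) : (0 < q)%nat ->
  Rle (Rmult 4 (Rpower (INR q) (Rdiv 3 4))) (INR a) -> (256 * q ^ 3 <= a ^ 4)%nat.
Proof.
move=> q0 H.
have qp : 0 < INR q by apply: lt_0_INR; apply/ssrnat.ltP.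
set x := Rpower (INR q) (3 / 4).
have x0 : 0 < x by rewrite /x /Rpower; apply: exp_pos.
have x4 : x ^ 4 = INR q ^ 3.
  rewrite -Rpower_pow // /x Rpower_mult -Rpower_pow //.
  by congr Rpower; simpl; lra.
move: H; rewrite -/x => H; clearbody x.
have : (4 * x) ^ 4 <= INR a ^ 4 by apply: pow_incr; split; lra.
rewrite Rpow_mult_distr x4 => H2.
apply/ssrnat.leP; apply: INR_le; rewrite !expnS expn0 !muln1 -!multE !mult_INR.
move: H2; rewrite /pow (_ : INR 256 = 256); last by simpl; lra.
lra.
Qed.
Lemma four_pos : Rlt 0 4.
Proof. lra. Qed.
End Bridge.


From mathcomp Require Import lra.

Section Ham.
Local Open Scope ring_scope.
Variable F : finFieldType.
Variable A : {set F}.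
Hypothesis A0 : (0:F) \notin A.
Hypothesis A1 : (1:F) \in A.
Hypothesis AM : {in A &, forall x y, x * y \in A}.

Definition Rl : rel F := fun x y => x + y \in A.

Lemma RlC x y : Rl x y = Rl y x.
Proof. by rewrite /Rl addrC. Qed.

Lemma RlM g x y : g \in A -> Rl x y -> Rl (g * x) (g * y).
Proof. by move=> gA; rewrite /Rl -mulrDr; apply: AM. Qed.

Lemma Rlb b y : 1 + b \in A -> y \in A -> Rl y (b * y).
Proof.
by move=> bA yA; rewrite /Rl -{1}(mul1r y) -mulrDl; apply: AM.
Qed.

Lemma inA_neq0 x : x \in A -> x != 0.
Proof. by apply: contraTneq => ->. Qed.

Lemma expA b n : b \in A -> b ^+ n \in A.
Proof. by move=> bA; elim: n => [|n IH]; rewrite ?expr0 // exprS AM. Qed.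

Definition mon (X : {set F}) :=
  [/\ (1:F) \in X, X \subset A & {in X &, forall x y, x * y \in X}].

Definition HC (X : {set F}) (d : seq F) :=
  [/\ uniq d, d =i X, (1 < size d)%N & cycle Rl d].

Lemma mon_inv X : mon X -> {in X, forall x, x^-1 \in X}.
Proof.
case=> X1 XA XM x xX.
have x0 : x != 0 by apply: inA_neq0; apply: (subsetP XA).
have sub : [set x * y | y in X] \subset X.
  by apply/subsetP => z /imsetP [y yX ->]; apply: XM.
have : [set x * y | y in X] == X.
  by rewrite eqEcard sub card_imset //=; apply: mulfI.
move/eqP => E; move: X1; rewrite -E => /imsetP [y yX].
by move=> E1; rewrite E; have -> : x^-1 = y by rewrite -[y](mulKf x0) -E1 mulr1.
Qed.

Section Ext.
Variable X : {set F}.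
Hypothesis monX : mon X.
Variable b : F.
Hypothesis bA : b \in A.
Hypothesis b1A : 1 + b \in A.
Hypothesis bX : b \notin X.

Let b0 : b != 0. Proof. exact: inA_neq0. Qed.

Lemma exP : exists n, (0 < n)%N && (b ^+ n \in X).
Proof.
exists (#|F|.-1); have q1 := finNzRing_gt1 F.
have -> : b ^+ #|F|.-1 = 1.
  apply: (mulfI b0); rewrite mulr1 -exprS prednK ?expf_card //.
  exact: ltnW q1.
by case: monX => ->; rewrite andbT -ltnS prednK //; exact: ltnW q1.
Qed.

Definition r := ex_minn exP.

Lemma r_spec : [/\ (0 < r)%N, b ^+ r \in X & forall m, (0 < m)%N -> b ^+ m \in X -> (r <= m)%N].
Proof.
rewrite /r; case: ex_minnP => m /andP [m0 mX] H; split => // k k0 kX.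
by apply: H; rewrite k0 kX.
Qed.

Lemma r_gt1 : (1 < r)%N.
Proof.
case: r_spec => r0 rX _.
have : r != 1%N by apply: contraNneq bX => E; rewrite E expr1 in rX.
lia.
Qed.

Lemma Xinv : {in X, forall x, x^-1 \in X}. Proof. exact: mon_inv. Qed.

Lemma XA : X \subset A. Proof. by case: monX. Qed.

Lemma Xneq0 y : y \in X -> y != 0.
Proof. by move=> yX; apply: inA_neq0; apply: (subsetP XA). Qed.

Lemma disj i j y y' : (i < r)%N -> (j < r)%N -> y \in X -> y' \in X ->
  b ^+ i * y = b ^+ j * y' -> i = j.
Proof.
wlog ij : i j y y' / (i <= j)%N.
  move=> W ir jr yX y'X E; case: (leqP i j) => ij; first exact: W E.
  by symmetry; apply: (W j i y' y) => //; lia.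
move=> ir jr yX y'X E.
case: (ltngtP i j) => // lij; last lia.
have E2 : b ^+ (j - i) = y / y'.
  have : b ^+ i * y = b ^+ i * (b ^+ (j - i) * y').
    by rewrite mulrA -exprD subnKC ?E // ltnW.
  move/(mulfI (expf_neq0 i b0)) => E3.
  by apply/(canRL (mulfK (Xneq0 y'X))).
case: r_spec => _ _ H.
have : (r <= j - i)%N by apply: H; [lia | rewrite E2; case: monX => _ _ M; apply: M => //; apply: Xinv].
lia.
Qed.

Definition X' := [set z | [exists i : 'I_r, [exists y in X, z == b ^+ i * y]]].

Lemma memX'P z : reflect (exists i y, [/\ (i < r)%N, y \in X & z = b ^+ i * y]) (z \in X').
Proof.
apply: (iffP idP).
  rewrite inE => /existsP [i /existsP [y /andP [yX /eqP ->]]].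
  by exists i, y; split.
move=> [i [y [ir yX ->]]]; rewrite inE; apply/existsP; exists (Ordinal ir).
by apply/existsP; exists y; rewrite yX eqxx.
Qed.

Lemma monX' : mon X'.
Proof.
case: monX => X1 XA' XM; case: r_spec => r0 rX _.
split.
- by apply/memX'P; exists 0%N, 1; rewrite expr0 mulr1.
- apply/subsetP => z /memX'P [i [y [_ yX ->]]]; apply: AM; first exact: expA.
  exact: (subsetP XA').
- move=> z1 z2 /memX'P [i [y [ir yX ->]]] /memX'P [j [y' [jr y'X ->]]].
  have E : b ^+ i * y * (b ^+ j * y') = b ^+ (i + j) * (y * y').
    by rewrite exprD mulrACA.
  rewrite E; apply/memX'P; case: (ltnP (i + j) r) => ijr.
    by exists (i + j)%N, (y * y'); split => //; apply: XM.
  exists (i + j - r)%N, (b ^+ r * (y * y')); split; first lia.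
    exact: (XM _ _ rX (XM _ _ yX y'X)).
  by rewrite mulrA -exprD subnK.
Qed.

Lemma XsubX' : X \subset X'.
Proof.
apply/subsetP => y yX; apply/memX'P; exists 0%N, y; split => //.
  by case: r_spec.
by rewrite expr0 mul1r.
Qed.

Lemma bX' : b \in X'.
Proof.
apply/memX'P; exists 1%N, 1; rewrite expr1 mulr1; split => //; first exact: r_gt1.
by case: monX.
Qed.

Lemma properX' : X \proper X'.
Proof. by apply/properP; split; [exact: XsubX' | exists b; [exact: bX'|]]. Qed.

Lemma X'A : X' \subset A. Proof. by case: monX'. Qed.

Section Inner.
Variables (h0 : F) (pd : seq F).
Hypothesis HCd : HC X (h0 :: pd).

Definition inv_ok n (x : F) (p : seq F) (pe : seq F) :=
  [/\ HC X (h0 :: pe), path Rl x p, x = b ^+ n.-1 * h0,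
      last x p = b ^+ n.-1 * last h0 pe &
      uniq (x :: p)] /\ [/\
      (forall z, z \in x :: p <-> exists i y, [/\ (i < n)%N, y \in X & z = b ^+ i * y]),
      (n < size (x :: p))%N &
      ((1 < n)%N -> Rl (last x p) x)].

Lemma HC_rev pe z : HC X (h0 :: rcons pe z) -> HC X (h0 :: z :: rev pe).
Proof.
case=> U M S C; split.
- by rewrite -rev_rcons cons_uniq mem_rev rev_uniq -cons_uniq.
- by move=> w; rewrite -rev_rcons -M !inE mem_rev.
- by rewrite /= size_rev; move: S; rewrite /= size_rcons.
- rewrite -rev_rcons -rotr1_rcons rotr_cycle -rev_cons rev_cycle.
  by rewrite (eq_cycle (e' := Rl)) // => u v; rewrite RlC.
Qed.

Lemma inner n : (0 < n)%N -> (n <= r)%N -> exists x p pe, inv_ok n x p pe.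
Proof.
elim: n => [//|n IH] _ nr.
case: n IH nr => [_ _ | n IH nr].
  case: HCd => U M S C; exists h0, pd, pd; split; split => //.
  - by move: C; rewrite /= rcons_path => /andP [].
  - by rewrite expr0 mul1r.
  - by rewrite expr0 mul1r.
  - move=> z; split.
      by move=> zd; exists 0%N, z; rewrite expr0 mul1r -M.
    move=> [i [y [i1 yX ->]]]; have -> : i = 0%N by lia.
    by rewrite expr0 mul1r M.
have [x [p [pe [[HCe Pp Ex El Up] [Mp Sp Cp]]]]] := IH isT (ltnW nr).
case/lastP: pe HCe El => [|pe0 z] HCe El.
  by case: HCe => _ _ /=; rewrite ltnn.
set f := fun y => b ^+ n.+1 * y.
have fA : b ^+ n.+1 \in A by exact: expA.
have HC' := HC_rev HCe.
have h0X : h0 \in X by case: HCd => _ M _ _; rewrite -M mem_head.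
have h0A : h0 \in A by apply: (subsetP XA).
have xA : x \in A by rewrite Ex; apply: AM => //; exact: expA.
have [Pz Cz] : path Rl z (rev pe0) /\ Rl (last z (rev pe0)) h0.
  by case: HC' => _ _ _; rewrite /= rcons_path => /andP [_ /andP [-> ->]].
have Ez : last x p = b ^+ n * z by rewrite El last_rcons.
have zA : z \in A.
  by apply: (subsetP XA); case: HCe => _ M _ _; rewrite -M inE mem_rcons mem_head orbT.
have perm1 : perm_eq (f h0 :: (x :: p) ++ map f (z :: rev pe0))
                     ((x :: p) ++ map f (h0 :: rcons pe0 z)).
  rewrite -cat1s perm_catCA /= perm_cons perm_cat2l perm_cons.
  rewrite (_ : f z :: _ = map f (z :: rev pe0)) // -rev_rcons map_rev.
  by rewrite perm_rev.
exists (f h0), ((x :: p) ++ map f (z :: rev pe0)), (z :: rev pe0).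
split; split => //.
- have Pf : path Rl (f z) (map f (rev pe0)).
    rewrite path_map; apply: (sub_path _ Pz) => u v /=; exact: RlM.
  have bnA : b ^+ n \in A by exact: expA.
  have e1 : Rl (b ^+ n.+1 * h0) (b ^+ n * h0).
    by rewrite RlC exprS -mulrA; apply: Rlb => //; apply: AM.
  have e2 : Rl (b ^+ n * z) (b ^+ n.+1 * z).
    by rewrite exprS -mulrA; apply: Rlb => //; apply: AM.
  rewrite [path _ _ _]/= cat_path /= Pp Ez Pf andbT /f Ex /=.
  by rewrite e1 e2.
- by rewrite /= last_cat Ez /= last_map.
- have Ufd : uniq (map f (h0 :: rcons pe0 z)).
    by rewrite map_inj_uniq; [case: HCe | exact: mulfI (expf_neq0 _ b0)].
  have Dis : ~~ has (mem (x :: p)) (map f (h0 :: rcons pe0 z)).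
    apply/hasPn => w /mapP [y yd ->]; apply/negP => /Mp [i [y' [ilt y'X E]]].
    have yX : y \in X by case: HCe => _ M _ _; rewrite -M.
    have := disj (i:=n.+1) (j:=i) nr (leq_trans ilt (ltnW nr)) yX y'X E.
    by move=> ei; rewrite ei ltnn in ilt.
  by rewrite (perm_uniq perm1) cat_uniq Up Ufd Dis.
- move=> w; rewrite (perm_mem perm1) mem_cat; split.
    case/orP => [/Mp [i [y [il yX ->]]] | /mapP [y yd ->]].
      by exists i, y; split => //; apply: (leq_trans il).
    exists n.+1, y; split => //; by case: HCe => _ M _ _; rewrite -M.
  move=> [i [y [il yX ->]]]; case: (ltngtP i n.+1) => ci.
  - by apply/orP; left; apply/Mp; exists i, y.
  - by move: il; rewrite ltnS leqNgt ci.
  - apply/orP; right; rewrite ci; apply: map_f.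
    by case: HCe => _ M _ _; rewrite M.
- rewrite /= size_cat /=; move: Sp => /=.
  by rewrite !ltnS => /leq_trans; apply; rewrite leq_addr.
- by move=> _; rewrite /= last_cat Ez /= last_map /f; apply: RlM.
Qed.

Lemma extend : exists d', HC X' d'.
Proof.
have [x [p [pe [[_ Pp _ _ Up] [Mp Sp Cp]]]]] := inner (ltnW r_gt1) (leqnn r).
exists (x :: p); split => //.
- move=> w; apply/idP/idP.
    by move/Mp => H; apply/memX'P.
  by move/memX'P => H; apply/Mp.
- exact: leq_trans r_gt1 (ltnW Sp).
- by rewrite /= rcons_path Pp Cp // r_gt1.
Qed.
End Inner.

Lemma init : X = [set 1] -> exists d', HC X' d'.
Proof.
move=> EX.
have X1 y : (y \in X) = (y == 1) by rewrite EX inE.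
have inv n : (0 < n)%N -> (n <= r)%N -> exists x p, [/\ path Rl x p, x = b ^+ n.-1,
   last x p = 1, uniq (x :: p) &
   (forall w, w \in x :: p <-> exists i, (i < n)%N /\ w = b ^+ i)] /\ size (x :: p) = n.
  elim: n => [//|n IH] _ nr.
  case: n IH nr => [_ _ | n IH nr].
    exists 1, [::]; split => //; split => //.
    move=> w; rewrite inE; split; first by move/eqP ->; exists 0%N; rewrite expr0.
    by case=> i [i1 ->]; have -> : i = 0%N by case: i i1.
  have [x [p [[Pp Ex Lp Up Mp] Sz]]] := IH isT (ltnW nr).
  exists (b * x), (x :: p); split; last by move: Sz => /= ->.
  split => //.
  - rewrite /= Pp andbT RlC Rlb // Ex; exact: expA.
  - by rewrite Ex /= exprS.
  - rewrite cons_uniq Up andbT; apply/negP => /Mp [i [il E]].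
    have := disj (i:=n.+1) (j:=i) nr (leq_trans il (ltnW nr)) (y:=1) (y':=1).
    have E' : b ^+ n.+1 = b ^+ i by rewrite exprS -E Ex.
    rewrite !X1 eqxx !mulr1 E' => /(_ isT isT erefl) ei.
    by rewrite ei ltnn in il.
  - move=> w; rewrite in_cons; split.
      case/orP => [/eqP -> | /Mp [i [il ->]]].
        by exists n.+1; rewrite Ex /= exprS.
      by exists i; split => //; apply: (leq_trans il).
    move=> [i [il ->]]; case: (ltngtP i n.+1) => ci.
    + by apply/orP; right; apply/Mp; exists i.
    + by move: il; rewrite ltnS leqNgt ci.
    + by rewrite ci Ex /= exprS eqxx.
have [x [p [[Pp Ex Lp Up Mp] Sz]]] := inv r (ltnW r_gt1) (leqnn r).
exists (x :: p); split => //.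
- move=> w; apply/idP/idP.
    move/Mp => [i [il ->]]; apply/memX'P; exists i, 1; rewrite mulr1; split => //.
    by rewrite X1.
  move/memX'P => [i [y [il]]]; rewrite X1 => /eqP -> ->; apply/Mp; exists i.
  by rewrite mulr1.
- by rewrite Sz r_gt1.
- rewrite /= rcons_path Pp Lp Ex /=.
  case: r_spec => _; rewrite X1 => /eqP rE _.
  rewrite RlC -[X in Rl _ X]rE -(prednK (ltnW r_gt1)) exprS Rlb //; exact: expA.
Qed.
End Ext.

Section Loop.
Hypothesis Hesc : forall H, mon H -> H != A ->
  exists b, [/\ b \in A, 1 + b \in A & b \notin H].
Hypothesis Agt1 : (1 < #|A|)%N.

Lemma loop k : forall (X : {set F}) (d : seq F), (#|A| - #|X| <= k)%N -> mon X -> HC X d ->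
  exists s, perm_eq s (enum A) /\ cycle Rl s.
Proof.
elim: k => [|k IH] X d Hk monX HCd.
all: case: (eqVneq X A) => [EX | XnA].
- exists d; case: HCd => U M _ C; split => //.
  by apply: uniq_perm U (enum_uniq _) _ => w; rewrite mem_enum M EX.
- have XsA : X \subset A by case: monX.
  have : X \proper A by rewrite properEneq XnA XsA.
  move/proper_card; lia.
- exists d; case: HCd => U M _ C; split => //.
  by apply: uniq_perm U (enum_uniq _) _ => w; rewrite mem_enum M EX.
- have [b [bA b1A bX]] := Hesc monX XnA.
  case: d HCd => [|h0 pd] HCd; first by case: HCd.
  have [d' HC'] := extend monX bA b1A bX HCd.
  apply: (IH _ d' _ (monX' monX bA b1A bX) HC').
  have := proper_card (properX' monX bA b1A bX).
  have := subset_leq_card (X'A monX bA b1A bX).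
  lia.
Qed.

Theorem ham : exists s, perm_eq s (enum A) /\ cycle Rl s.
Proof.
have mon1 : mon [set 1].
  split; first by rewrite inE.
    by apply/subsetP => w; rewrite inE => /eqP ->.
  by move=> u v; rewrite !inE => /eqP -> /eqP ->; rewrite mulr1.
have n1 : [set 1] != A.
  by apply: contraTneq Agt1 => <-; rewrite cards1.
have [b [bA b1A bX]] := Hesc mon1 n1.
have [d HCd] := init mon1 bA b1A bX erefl.
by apply: (loop (k := #|A|) (d := d) _ (monX' mon1 bA b1A bX)) => //; lia.
Qed.
End Loop.
End Ham.

Section Gen.
Local Open Scope ring_scope.
Lemma card_sum (T : finType) (P : pred T) : #|[set x | P x]| = (\sum_x (P x : nat))%N.
Proof.
rewrite -sum1_card big_mkcond /=; apply: eq_bigr => x _; rewrite inE.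
by case: (P x).
Qed.

Lemma swap3 (T U V : finType) (P : T -> U -> bool) (Q : T -> V -> bool) :
  (\sum_(a : U) \sum_(b : V) #|[set x : T | P x a && Q x b]|)%N =
  (\sum_(x : T) #|[set a | P x a]| * #|[set b | Q x b]|)%N.
Proof.
transitivity (\sum_(a : U) \sum_(b : V) \sum_(x : T) (P x a : nat) * (Q x b : nat))%N.
  by apply: eq_bigr => a _; apply: eq_bigr => b _; rewrite card_sum; apply: eq_bigr => x _; rewrite mulnb.
transitivity (\sum_(x : T) \sum_(a : U) \sum_(b : V) (P x a : nat) * (Q x b : nat))%N.
  rewrite exchange_big /=. 
  transitivity (\sum_(b : V) \sum_(x : T) \sum_(a : U) (P x a : nat) * (Q x b : nat))%N.
    by apply: eq_bigr => b _; rewrite exchange_big.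
  rewrite exchange_big /=; apply: eq_bigr => x _; exact: exchange_big.
apply: eq_bigr => x _; rewrite !card_sum big_distrlr /=.
done.
Qed.

Lemma sum_sq_expand (I : finType) (g : I -> int) (M T : int) :
  \sum_i (M * g i - T) ^+ 2 =
  M ^+ 2 * \sum_i g i ^+ 2 - 2 * M * T * \sum_i g i + T ^+ 2 * #|I|%:R.
Proof.
transitivity (\sum_i (M ^+ 2 * g i ^+ 2 - 2 * M * T * g i + T ^+ 2)).
  by apply: eq_bigr => i _; ring.
rewrite big_split sumrB /= -!mulr_sumr sumr_const mulr_natr.
by rewrite -mulrnAr expr2.
Qed.

Lemma var_gen (I : finType) (g : I -> int) (S : pred I) (c M T : int) :
  (forall i, S i -> g i = c) ->
  #|S|%:R * (M * c - T) ^+ 2 <= \sum_i (M * g i - T) ^+ 2.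
Proof.
move=> Sc; rewrite (bigID S) /=.
have -> : \sum_(i | S i) (M * g i - T) ^+ 2 = \sum_(i in S) (M * c - T) ^+ 2.
  by apply: eq_bigr => i /Sc ->.
rewrite sumr_const mulr_natl lerDl; apply: sumr_ge0 => i _; exact: sqr_ge0.
Qed.

End Gen.

Section Count.
Local Open Scope ring_scope.
Variable F : finFieldType.
Variables K L : {set F}.
Hypothesis K0 : (0:F) \notin K.
Hypothesis KM : {in K &, forall x y, x * y \in K}.
Hypothesis KV : {in K, forall x, x^-1 \in K}.
Hypothesis L0 : (0:F) \notin L.
Hypothesis LM : {in L &, forall x y, x * y \in L}.
Hypothesis LV : {in L, forall x, x^-1 \in L}.

Lemma card_div (S : {set F}) x : (0:F) \notin S ->
  #|[set a | x / a \in S]| = if x != 0 then #|S| else 0%N.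
Proof.
move=> S0; case: (eqVneq x 0) => [-> | x0] /=.
  apply/eqP; rewrite cards_eq0; apply/eqP/setP => a; rewrite !inE mul0r.
  by rewrite (negbTE S0).
have inv : involutive (fun a => x / a).
  by move=> a /=; rewrite invfM invrK mulVKf.
exact: (card_preimset S (inv_inj inv)).
Qed.

Lemma div_inK x a : a \in K -> (x / a \in K) = (x \in K).
Proof.
move=> aK; have a0 : a != 0 by apply: contraTneq aK => ->.
apply/idP/idP => h.
  by rewrite -(divfK a0 x); apply: KM.
by apply: KM => //; apply: KV.
Qed.

Lemma div_inL x a : a \in L -> (x / a \in L) = (x \in L).
Proof.
move=> aL; have a0 : a != 0 by apply: contraTneq aL => ->.
apply/idP/idP => h.
  by rewrite -(divfK a0 x); apply: LM.
by apply: LM => //; apply: LV.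
Qed.

Lemma card_div2 (S : {set F}) x y : (0:F) \notin S ->
  {in S &, forall u v, u * v \in S} -> {in S, forall u, u^-1 \in S} ->
  #|[set a | (x / a \in S) && (y / a \in S)]| = if y / x \in S then #|S| else 0%N.
Proof.
move=> S0 SM SV.
case: (eqVneq x 0) => [-> | x0].
  rewrite invr0 mulr0 (negbTE S0).
  apply/eqP; rewrite cards_eq0; apply/eqP/setP => a; rewrite !inE mul0r.
  by rewrite (negbTE S0).
case: ifP => yx.
  have := card_div x S0; rewrite x0 => <-; apply: eq_card => a; rewrite !inE.
  case xa: (x / a \in S) => //=.
  have -> : y / a = (y / x) * (x / a) by rewrite mulrA divfK.
  exact: SM.
apply/eqP; rewrite cards_eq0; apply/eqP/setP => a; rewrite !inE.
apply/negP => /andP [xa ya].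
have a0 : a != 0 by apply: contraTneq xa => ->; rewrite invr0 mulr0.
have : (y / a) * (x / a)^-1 \in S by apply: SM => //; apply: SV.
by rewrite invfM invrK mulrACA mulVf // mulr1 yx.
Qed.


Definition Gc a b := #|[set x | (x / a \in K) && ((x + 1) / b \in L)]|.
Definition g0 := #|[set x | (x \in K) && (x + 1 \in L)]|.
Definition Pset := [set xy : F * F | (xy.2 / xy.1 \in K) && ((xy.2 + 1) / (xy.1 + 1) \in L)].
Definition N2 := #|[set x : F | (x != 0) && (x + 1 != 0)]|.

Lemma F1 a b : a \in K -> b \in L -> Gc a b = g0.
Proof.
by move=> aK bL; rewrite /Gc /g0; apply: eq_card => x; rewrite !inE div_inK // div_inL.
Qed.

Lemma F2 : (\sum_a \sum_b Gc a b)%N = (N2 * (#|K| * #|L|))%N.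
Proof.
transitivity (\sum_x #|[set a | (x / a)%R \in K]| * #|[set b | ((x + 1) / b)%R \in L]|)%N.
  exact: (swap3 (fun x a => (x / a)%R \in K) (fun x b => ((x + 1) / b)%R \in L)).
under eq_bigr => x _ do rewrite !card_div //.
rewrite /N2 card_sum big_distrl /=; apply: eq_bigr => x _.
by case: (x != 0); case: (x + 1 != 0); rewrite /= ?mul0n ?mul1n ?muln0.
Qed.

Lemma F3 : (\sum_a \sum_b (Gc a b) ^ 2)%N = (#|K| * #|L| * #|Pset|)%N.
Proof.
transitivity (\sum_a \sum_b #|[set xy : F * F |
    (((xy.1 / a)%R \in K) && ((xy.2 / a)%R \in K)) &&
    ((((xy.1 + 1) / b)%R \in L) && (((xy.2 + 1) / b)%R \in L))]|)%N.
  apply: eq_bigr => a _; apply: eq_bigr => b _.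
  rewrite /Gc expnS expn1 -cardsX; apply: eq_card => [[x y]].
  by rewrite !inE /= andbACA.
transitivity (\sum_(xy : F * F) #|[set a | ((xy.1 / a)%R \in K) && ((xy.2 / a)%R \in K)]| *
     #|[set b | (((xy.1 + 1) / b)%R \in L) && (((xy.2 + 1) / b)%R \in L)]|)%N.
  exact: (swap3 (fun xy a => ((xy.1 / a)%R \in K) && ((xy.2 / a)%R \in K))
                (fun xy b => (((xy.1 + 1) / b)%R \in L) && (((xy.2 + 1) / b)%R \in L))).
under eq_bigr => xy _ do rewrite !card_div2 //.
rewrite card_sum big_distrr /=; apply: eq_bigr => xy _.
by case: (_ \in K); case: (_ \in L); rewrite /= ?mul0n ?mul1n ?muln0 ?muln1.
Qed.


Lemma N2E : (N2 + 2)%N = #|F|.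
Proof.
have E : [set x : F | (x != 0) && (x + 1 != 0)] = ~: [set 0; -1].
  by apply/setP => x; rewrite !inE addr_eq0 negb_or.
rewrite /N2 E; have := cardsC [set (0:F); -1]; rewrite cards2.
by rewrite eq_sym oppr_eq0 oner_eq0 /= addnC.
Qed.

Lemma F4 : (#|Pset| <= #|F| + #|K| * #|L|)%N.
Proof.
set D := [set xy : F * F | xy.2 == xy.1].
rewrite -(cardsID D Pset); apply: leq_add.
  have finj : {in Pset :&: D &, injective (@fst F F)}.
    move=> [x y] [x' y']; rewrite !inE /= => /andP [_ /eqP ->] /andP [_ /eqP ->].
    by move=> /= ->.
  rewrite -(card_in_imset finj); exact: max_card.
set g := fun xy : F * F => (xy.2 / xy.1, (xy.2 + 1) / (xy.1 + 1)).
have key : forall x y t w, y != x -> y / x = t -> (y + 1) / (x + 1) = w ->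
    t \in K -> w \in L -> t != w /\ (t - w) * x = w - 1.
  move=> x y t w yx Et Ew tK wL.
  have x0 : x != 0 by apply: contraTneq tK => x0; rewrite -Et x0 invr0 mulr0.
  have x1 : x + 1 != 0 by apply: contraTneq wL => x1; rewrite -Ew x1 invr0 mulr0.
  have ey : y = t * x by rewrite -Et divfK.
  have ew : y + 1 = w * (x + 1) by rewrite -Ew divfK.
  have E1 : (t - w) * x = w - 1.
    apply/eqP; rewrite -subr_eq0; apply/eqP.
    transitivity ((t * x + 1) - w * (x + 1)); first ring.
    by rewrite -ey -ew subrr.
  split => //; apply: contra_neq yx => tw.
  move: E1; rewrite tw subrr mul0r => E1.
  have w1 : w = 1 by apply/eqP; rewrite -subr_eq0 -E1.
  by rewrite ey tw w1 mul1r.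
have ginj : {in Pset :\: D &, injective g}.
  move=> [x y] [x' y']; rewrite !inE /=.
  move=> /andP [yx /andP [tK wL]] /andP [yx' /andP [tK' wL']] [Et Ew].
  have [tw E1] := key x y _ _ yx erefl erefl tK wL.
  have [_ E2] := key x' y' _ _ yx' erefl erefl tK' wL'.
  rewrite Et Ew -E2 in E1; rewrite Et Ew in tw.
  have xx : x = x' by apply: (mulfI _ E1); rewrite subr_eq0.
  have x0 : x != 0 by apply: contraTneq tK => ->; rewrite invr0 mulr0.
  congr (_, _) => //; rewrite -(divfK x0 y) Et -xx divfK //.
rewrite -(card_in_imset ginj) -cardsX; apply: subset_leq_card.
by apply/subsetP => _ /imsetP [[x y] H ->]; move: H; rewrite !inE /= => /and3P [_ -> ->].
Qed.


Hypothesis K1 : (1:F) \in K.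
Hypothesis L1 : (1:F) \in L.

Lemma var_bound :
  ((#|F|%:R ^+ 2) * g0%:R - (N2 * (#|K| * #|L|))%:R) ^+ 2 <= 5 * #|F|%:R * (#|F|%:R ^+ 2) ^+ 2 :> int.
Proof.
set q := #|F|; set k := #|K|; set l := #|L|; set P := #|Pset|.
set M : int := q%:R ^+ 2; set T : int := (N2 * (k * l))%:R.
set X := (M * g0%:R - T) ^+ 2.
pose g (ab : F * F) : int := (Gc ab.1 ab.2)%:R.
pose S := [pred ab : F * F | (ab.1 \in K) && (ab.2 \in L)].
have cS : #|S| = (k * l)%N.
  rewrite -cardsX; apply: eq_card => [[a b]]; by rewrite !inE.
have H0 := var_gen (g := g) (S := S) (c := g0%:R) M T.
have H1 : (k * l)%:R * X <= \sum_i (M * g i - T) ^+ 2.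
  by rewrite -cS; apply: H0 => [[a b]] /andP [aK bL]; rewrite /g /= F1.
rewrite sum_sq_expand in H1.
have Sg : \sum_i g i = T.
  rewrite /g -(pair_bigA _ (fun a b => (Gc a b)%:R)) /=.
  rewrite /T -F2 natr_sum; apply: eq_bigr => a _; by rewrite natr_sum.
have Sg2 : \sum_i g i ^+ 2 = (k * l * P)%:R.
  rewrite /g -(pair_bigA _ (fun a b => (Gc a b)%:R ^+ 2)) /=.
  rewrite -F3 natr_sum; apply: eq_bigr => a _; rewrite natr_sum.
  by apply: eq_bigr => b _; rewrite natrX.
rewrite Sg Sg2 card_prod natrM in H1.
have q2 : (2 <= q)%N by have := N2E; rewrite -/q; lia.
have k0 : (0 < k)%N by apply/card_gt0P; exists 1.
have l0 : (0 < l)%N by apply/card_gt0P; exists 1.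
have kq : (k <= q)%N by exact: max_card.
have lq : (l <= q)%N by exact: max_card.
have hP : (P <= q + k * l)%N by exact: F4.
have hN : (N2 + 2 = q)%N by exact: N2E.
set Q : int := q%:R; set ka : int := (k * l)%:R; set p : int := P%:R; set n2 : int := N2%:R.
have eT : T = n2 * ka by rewrite /T natrM.
have eN : n2 = Q - 2 by rewrite /n2 /Q -hN natrD addrK.
have ka0 : 0 < ka by rewrite ltr0n muln_gt0 k0 l0.
have kaM : ka <= M by rewrite /ka /M -natrX ler_nat expnS expn1 leq_mul.
have pk : p <= Q + ka by rewrite /p /Q /ka -natrD ler_nat.
have Q2 : 2 <= Q by rewrite /Q (ler_nat _ 2).
have eM : M = Q ^+ 2 by [].
have h2 : X <= M ^+ 2 * p - M * n2 ^+ 2 * ka.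
  have E : M ^+ 2 * (k * l * P)%:R - 2 * M * T * T + T ^+ 2 * (#|F| * #|F|)%:R
         = ka * (M ^+ 2 * p - M * n2 ^+ 2 * ka).
    rewrite eT /ka /p /n2 eM /Q !natrM; ring.
  have E2 : k%:R * l%:R = ka by rewrite /ka natrM.
  rewrite E E2 in H1.
  by rewrite -(ler_pM2l ka0).
have M0 : 0 <= M by rewrite eM sqr_ge0.
have s1 : M ^+ 2 * p <= M ^+ 2 * (Q + ka) by rewrite ler_wpM2l // sqr_ge0.
have s2 : M * ka * (4 * Q - 4) <= M * M * (4 * Q - 4).
  by rewrite ler_wpM2r ?ler_wpM2l //; lra.
rewrite eN eM in h2 s1 s2 *.
nra.
Qed.
End Count.


Section Numeric.
Local Open Scope ring_scope.
Lemma numeric (q a h g1 h1 n2 : int) :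
  n2 = q - 2 -> 5 <= q -> 0 <= h -> 2 * h <= a -> 256 * q ^+ 3 <= a ^+ 4 -> g1 <= h1 ->
  (q ^+ 2 * g1 - n2 * (a * a)) ^+ 2 <= 5 * q * (q ^+ 2) ^+ 2 ->
  (q ^+ 2 * h1 - n2 * (h * a)) ^+ 2 <= 5 * q * (q ^+ 2) ^+ 2 -> False.
Proof.
move=> en2 q5 h0 ha aq gh Hu Hv.
set M := q ^+ 2; set W := 5 * q * M ^+ 2.
set u := n2 * (a * a) - M * g1; set v := M * h1 - n2 * (h * a).
set D := n2 * a * (a - h).
have M0 : 0 <= M by rewrite /M sqr_ge0.
have a0 : 0 <= a by lra.
have n20 : 0 <= n2 by lra.
have Du : D <= u + v.
  have : D = u + v - M * (h1 - g1) by rewrite /D /u /v; ring.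
  move=> ->; have : 0 <= M * (h1 - g1) by apply: mulr_ge0 => //; lra.
  lra.
have D0 : 0 <= D by rewrite /D; apply: mulr_ge0; [apply: mulr_ge0 | lra].
have u2 : u ^+ 2 <= W by rewrite /u -sqrrN opprB.
have v2 : v ^+ 2 <= W by [].
have D2 : D ^+ 2 <= 4 * W.
  have : D ^+ 2 <= (u + v) ^+ 2 by nra.
  have : (u + v) ^+ 2 <= 2 * u ^+ 2 + 2 * v ^+ 2.
    have : 0 <= (u - v) ^+ 2 by apply: sqr_ge0.
    nra.
  lra.
have D3 : n2 * (a * a) <= 2 * D.
  rewrite /D; have : 0 <= n2 * a * (a - 2 * h) by apply: mulr_ge0; [apply: mulr_ge0 | lra].
  have : 2 * (n2 * a * (a - h)) - n2 * (a * a) = n2 * a * (a - 2 * h) by ring.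
  lra.
have D4 : (n2 * (a * a)) ^+ 2 <= 4 * D ^+ 2.
  have : (n2 * (a * a)) ^+ 2 <= (2 * D) ^+ 2.
    have : 0 <= n2 * (a * a) by apply: mulr_ge0 => //; apply: mulr_ge0.
    nra.
  by rewrite exprMn; lra.
have D5 : n2 ^+ 2 * (256 * q ^+ 3) <= n2 ^+ 2 * a ^+ 4.
  by rewrite ler_wpM2l // sqr_ge0.
have E1 : (n2 * (a * a)) ^+ 2 = n2 ^+ 2 * a ^+ 4 by ring.
have F5 : n2 ^+ 2 * (256 * q ^+ 3) <= 16 * (5 * q * M ^+ 2).
  rewrite /W in D2; lra.
rewrite /M en2 in F5.
have q3 : 0 < q ^+ 3 by apply: exprn_gt0; lra.
have : q ^+ 3 * (256 * (q - 2) ^+ 2) <= q ^+ 3 * (80 * q ^+ 2).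
  lra.
rewrite ler_pM2l // => F6.
nra.
Qed.
End Numeric.


Section Final.
Local Open Scope ring_scope.

Lemma main_comb (F : finFieldType) (A : {set F}) :
  mult_subgroup A -> (256 * #|F| ^ 3 <= #|A| ^ 4)%N ->
  exists s : seq F, good_cyclic_ordering A s.
Proof.
case=> A0 A1 AM AV hq.
have aq : (#|A| <= #|F|)%N := max_card _.
have q0 : (0 < #|F|)%N by apply/card_gt0P; exists 0.
have q256 : (256 <= #|F|)%N.
  have : (#|A| ^ 4 <= #|F| ^ 4)%N by rewrite leq_exp2r.
  move=> h4; have : (256 * #|F| ^ 3 <= #|F| * #|F| ^ 3)%N.
    by rewrite -expnS (leq_trans hq h4).
  by rewrite leq_pmul2r // expn_gt0 q0.
have Agt1 : (1 < #|A|)%N.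
  rewrite ltnNge; apply/negP => a1.
  have : (#|A| ^ 4 <= 1)%N by rewrite -(exp1n 4) leq_exp2r.
  have : (1 < 256 * #|F| ^ 3)%N.
    by rewrite (@leq_trans 256) // leq_pmulr // expn_gt0 q0.
  move=> h1 h2; have := leq_trans hq h2; rewrite leqNgt h1 //.
have Hesc : forall H, mon A H -> H != A ->
    exists b, [/\ b \in A, 1 + b \in A & b \notin H].
  move=> H monH HnA.
  case: (monH) => H1 HA HM.
  have H0 : (0:F) \notin H by apply: contra A0; apply: (subsetP HA).
  have HV := mon_inv A0 monH.
  have h2 : (2 * #|H| <= #|A|)%N.
    have : H \proper A by rewrite properEneq HnA HA.
    case/properP => _ [c cA cH].
    have c0 : c != 0 by apply: contraNneq A0 => <-.
    set cH' := [set c * y | y in H].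
    have dis : [disjoint H & cH'].
      apply/pred0P => z /=; apply/negP => /andP [zH /imsetP [y yH E]].
      apply: (negP cH); have -> : c = z / y.
        have y0 : y != 0 by apply: contraNneq H0 => <-.
        by rewrite E mulfK.
      by apply: HM => //; apply: HV.
    have ccard : #|cH'| = #|H| by rewrite card_imset //; apply: mulfI.
    have sub : H :|: cH' \subset A.
      rewrite subUset HA /=; apply/subsetP => _ /imsetP [y yH ->].
      by apply: AM => //; apply: (subsetP HA).
    have := subset_leq_card sub; rewrite cardsU.
    move: dis; rewrite -setI_eq0 => /eqP ->; rewrite cards0 subn0 ccard.
    by rewrite mul2n -addnn.
  case: (boolP [exists b, [&& b \in A, 1 + b \in A & b \notin H]]).
    by case/existsP => b /and3P [? ? ?]; exists b.
  move=> nb; exfalso.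
  have gh : (g0 A A <= g0 H A)%N.
    apply: subset_leq_card; apply/subsetP => x; rewrite !inE => /andP [xA x1A].
    rewrite x1A andbT; apply/negPn/negP => xH; move/negP: nb; apply.
    by apply/existsP; exists x; rewrite xA addrC x1A xH.
  have VA := var_bound A0 AM AV A0 AM AV A1 A1.
  have VH := var_bound H0 HM HV A0 AM AV H1 A1.
  have eN := N2E F.
  apply: (@numeric #|F|%:R #|A|%:R #|H|%:R (g0 A A)%:R (g0 H A)%:R (N2 F)%:R).
  - by rewrite -eN natrD addrK.
  - by rewrite (ler_nat _ 5) (leq_trans _ q256).
  - exact: ler0n.
  - by rewrite -(natrM _ 2) ler_nat.
  - by rewrite -!natrX -natrM ler_nat.
  - by rewrite ler_nat.
  - by move: VA; rewrite !natrM.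
  - by move: VH; rewrite !natrM.
have [s [P C]] := ham A0 A1 AM Hesc Agt1.
by exists s; split.
Qed.
End Final.

Theorem theorem8p6 :
  exists c : R, Rlt 0 c /\
    forall (F : finFieldType) (A : {set F}),
      mult_subgroup A ->
      Rle (Rmult c (Rpower (INR #|F|) (Rdiv 3 4))) (INR #|A|) ->
      exists s : seq F, good_cyclic_ordering A s.
Proof.
eexists; split; first exact: four_pos.
move=> F A hA hR; apply: main_comb => //.
by apply: bridge hR; apply/card_gt0P; exists 0%R.
Qed.
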